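(* Let $z^{(L)}:\mathbb{R}^{n_0}\to\mathbb{R}$ be a scalar-valued $L$-layer network given by $a^{(0)}=x$, $z^{(k)}=W^{(k)}a^{(k-1)}+b^{(k)}$, $a^{(k)}=\sigma^{(k)}(z^{(k)})$ for $k=1,\dots,L-1$, and $z^{(L)}=W^{(L)}a^{(L-1)}+b^{(L)}$ with $W^{(L)}\in\mathbb{R}^{1\times n_{L-1}}$, where each activation $\sigma^{(k)}_i$ is differentiable and slope-restricted in $[\alpha^{(k)}_i,\beta^{(k)}_i]$ with $0\le\alpha^{(k)}_i\le\beta^{(k)}_i<\infty$. Fix $l\in\{1,\dots,L-1\}$ and regard $z^{(L)}$ as a function of $a^{(l)}$ through layers $l+1,\dots,L$. Define matrices $S^{(k,l)}$ for $k=l+1,\dots,L$ by $$S^{(l+1,l)}=|W^{(l+1)}|,\qquad S^{(k,l)}=|W^{(k)}|\,\mathrm{diag}(\beta^{(k-1)})\,S^{(k-1,l)}\quad (k\ge l+2).$$ Then $\Big\|\big(\frac{\partial z^{(L)}}{\partial a^{(l)}}\big)^\top\Big\|_\infty\le\|S^{(L,l)}\|_\infty$ at every point.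
   Context: $|A|$ denotes the elementwise absolute value of a matrix $A$. A function $\sigma:\mathbb{R}\to\mathbb{R}$ is slope-restricted in $[\alpha,\beta]$ if $\alpha\le\frac{\sigma(x)-\sigma(y)}{x-y}\le\beta$ for all $x\ne y$. For a matrix $A$, $\|A\|_\infty$ is the induced $\ell_\infty$ operator norm (maximum absolute row sum). *)

(* Defs.v *)
From HB Require Import structures.
From mathcomp Require Import all_boot all_order all_algebra.
From mathcomp Require Import all_classical all_reals all_analysis.
Set Implicit Arguments. Unset Strict Implicit. Unset Printing Implicit Defensive.
Import Order.TTheory GRing.Theory Num.Theory.
Import numFieldNormedType.Exports.
Local Open Scope ring_scope.

Section Net.
Variable R : realType.

Definition mxabs m n (A : 'M[R]_(m, n)) : 'M[R]_(m, n) := map_mx (fun x => `|x|) A.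

(* induced l_infty operator norm: maximum absolute row sum *)
Definition mxnorm_inf m n (A : 'M[R]_(m, n)) : R :=
  \big[Num.max/0]_(i < m) \sum_(j < n) `|A i j|.

Definition slope_restricted (s : R -> R) (al be : R) : Prop :=
  forall x y : R, x != y -> al <= (s x - s y) / (x - y) <= be.

Variables (n : nat -> nat)
  (W : forall k : nat, 'M[R]_(n k, n k.-1))
  (b : forall k : nat, 'cV[R]_(n k))
  (sigma : forall k : nat, 'I_(n k) -> R -> R)
  (betav : forall k : nat, 'I_(n k) -> R)
  (l : nat).

(* forward pass from a^(l): act m a = a^(m+l) *)
Fixpoint act (m : nat) (a : 'cV[R]_(n l)) : 'cV[R]_(n (m + l)) :=
  match m return 'cV[R]_(n (m + l)) with
  | 0 => a
  | m'.+1 => \col_i @sigma (m'.+1 + l) i ((W (m'.+1 + l) *m act m' a + b (m'.+1 + l)) i 0)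
  end.

(* S^(m+1+l, l), for the hidden weights W *)
Fixpoint Shid (m : nat) : 'M[R]_(n (m.+1 + l), n l) :=
  match m return 'M[R]_(n (m.+1 + l), n l) with
  | 0 => mxabs (W l.+1)
  | m'.+1 => mxabs (W (m'.+2 + l)) *m diag_mx (\row_i @betav (m'.+1 + l) i) *m Shid m'
  end.

(* S^(L,l) with L = p.+1 + l and output weights WL : 1 x n_(L-1) *)
Definition Sfinal (p : nat) : 'M[R]_(1, n (p + l)) -> 'M[R]_(1, n l) :=
  match p return 'M[R]_(1, n (p + l)) -> 'M[R]_(1, n l) with
  | 0 => fun WL => mxabs WL
  | q.+1 => fun WL => mxabs WL *m diag_mx (\row_i @betav (q.+1 + l) i) *m Shid q
  end.

(* z^(L) as a function of a^(l), L = p.+1 + l *)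
Definition zL (p : nat) (WL : 'M[R]_(1, n (p + l))) (bL : R) (a : 'cV[R]_(n l)) : R :=
  (WL *m act p a) 0 0 + bL.

End Net.

(* Main.v *)
Require Import Defs.
From HB Require Import structures.
From mathcomp Require Import all_boot all_order all_algebra.
From mathcomp Require Import all_classical all_reals all_analysis.
Import Order.TTheory GRing.Theory Num.Theory.
Import numFieldNormedType.Exports.
Local Open Scope ring_scope.
Local Open Scope classical_set_scope.

Section Aux.
Variables (R : realType) (V : normedModType R).

Lemma derive1P' (f : V -> R^o) x v :
  'D_v f x = 'D_1 (fun h : R => f (h *: v + x)) 0.
Proof.
rewrite /derive; set g1 := fun h => h^-1 *: _; set g2 := fun h => h^-1 *: _.
suff -> : g1 = g2 by [].
by rewrite funeqE /g1 /g2 => h /=; rewrite addr0 scale0r add0r [_%:A]mulr1.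
Qed.

Lemma is_derive_comp1 (f : V -> R^o) (s : R -> R) a v d :
  is_derive a v f d -> derivable s (f a) 1 ->
  is_derive a v (s \o f) (s^`()%classic (f a) * d).
Proof.
move=> [df Df] ds.
have dg := (iffLR (derivable1P f a v) df).
have g0 : (fun h : R => f (h *: v + a)) 0 = f a by rewrite /= scale0r add0r.
split.
  apply/derivable1P => /=.
  have -> : (fun h : R => s (f (h *: v + a))) = s \o (fun h : R => f (h *: v + a)) by [].
  by apply/derivable1_diffP/differentiable_comp; apply/derivable1_diffP; rewrite ?g0.
rewrite derive1P' /=.
have -> : (fun h : R => s (f (h *: v + a))) = s \o (fun h : R => f (h *: v + a)) by [].
rewrite -derive1E derive1_comp ?g0 //.
by rewrite -Df derive1P' -derive1E.
Qed.

Lemma slope_deriv (s : R -> R) x al be :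
  derivable s x 1 ->
  (forall x y : R, x != y -> al <= (s x - s y) / (x - y) <= be) ->
  al <= s^`()%classic x <= be.
Proof.
move=> ds sl.
rewrite derive1E /derive.
have H : \forall h \near (0:R)^', al <= h^-1 *: ((s \o shift x) (h *: 1) - s x) <= be.
  near=> h.
  have h0 : h != 0 by near: h; exact: nbhs_dnbhs_neq.
  have := sl (h + x) x; rewrite addrK mulrC /= [_%:A]mulr1; apply.
  by rewrite -subr_eq0 addrK.
apply/andP; split.
  by apply: limr_ge => //; apply: filterS H => h /andP[].
by apply: limr_le => //; apply: filterS H => h /andP[].
Unshelve. all: by end_near.
Qed.

Lemma is_derive_lin (N : nat) (g : 'I_N -> V -> R^o) (w : 'I_N -> R) (c : R) a v
  (d : 'I_N -> R) :
  (forall j, is_derive a v (g j) (d j)) ->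
  is_derive a v (fun x => \sum_j w j * g j x + c) (\sum_j w j * d j).
Proof.
move=> hd.
have -> : (fun x => \sum_j w j * g j x + c) = (\sum_j (w j \*: g j)) + cst c.
  by apply/funext => x; rewrite /= fct_sumE.
rewrite -[X in is_derive _ _ _ X]addr0.
apply: is_deriveD.
Qed.
End Aux.

Section Aff.
Variables (R : realType) (V : normedModType R).
Lemma is_derive_affine (f : V -> R^o) a v c :
  (forall h, f (h *: v + a) = f a + h * c) -> is_derive a v f c.
Proof.
move=> H.
have E : (fun h => h^-1 *: ((f \o shift a) (h *: v) - f a)) @ (0:R)^' --> c.
  apply: cvg_near_cst; near=> h.
  have h0 : h != 0 by near: h; exact: nbhs_dnbhs_neq.
  by rewrite /= H addrC addKr /= -[X in X *: _]/(h^-1) [_ *: _]mulrA mulVf // mul1r.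
split; first by apply/cvg_ex; exists c.
by rewrite /derive; apply: (cvg_lim _ E).
Unshelve. all: by end_near.
Qed.
End Aff.

Section Main.
Variables (R : realType) (n : nat -> nat)
  (W : forall k : nat, 'M[R]_(n k, n k.-1))
  (b : forall k : nat, 'cV[R]_(n k))
  (sigma : forall k : nat, 'I_(n k) -> R -> R)
  (beta : forall k : nat, 'I_(n k) -> R)
  (l p : nat).

Hypothesis Hs : forall k (i : 'I_(n k)), (l < k)%N -> (k <= p + l)%N ->
  (forall x, derivable (sigma k i) x 1) /\ 0 <= beta k i /\
  (forall x, 0 <= (sigma k i)^`()%classic x <= beta k i).

Variables (a : 'cV[R]_(n l)) (i0 : 'I_(n l)).
Let v : 'cV[R]_(n l) := delta_mx i0 0.

Definition F m (j : 'I_(n (m + l))) : 'cV[R]_(n l) -> R^o :=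
  fun x => (@act R n W b sigma l m x) j 0.

Lemma F_succ m i : F m.+1 i = sigma (m.+1 + l) i \o
  (fun x => \sum_j W (m.+1 + l) i j * F m j x + b (m.+1 + l) i 0).
Proof. by apply/funext => x; rewrite /F /= !mxE. Qed.

Definition Bound m : 'I_(n (m + l)) -> Prop :=
  match m return 'I_(n (m + l)) -> Prop with
  | 0 => fun j => 'D_v (F 0 j) a = v j 0
  | m'.+1 => fun j => `|'D_v (F m'.+1 j) a| <= beta (m'.+1 + l) j * Shid W beta l m' j i0
  end.


Lemma F0_der j : is_derive a v (F 0 j) (v j 0).
Proof. by apply: is_derive_affine => h; rewrite /F /= !mxE addrC. Qed.

Lemma claim m : (m <= p)%N -> forall j, derivable (F m j) a v /\ Bound m j.
Proof.
elim: m => [_ j|m IH Hm i].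
  have [d1 d2] := F0_der j.
  by split.
have IH' := IH (ltnW Hm).
pose D j := 'D_v (F m j) a.
have hd : forall j, is_derive a v (F m j) (D j).
  by move=> j; apply: derivableP; case: (IH' j).
have k1 : (l < m.+1 + l)%N by rewrite addSn ltnS leq_addl.
have k2 : (m.+1 + l <= p + l)%N by rewrite leq_add2r.
have [ds [b0 sb]] := Hs _ i k1 k2.
have hin := @is_derive_lin R _ _ _ (fun j => W (m.+1 + l) i j) (b (m.+1 + l) i 0) a v _ hd.
have hc := @is_derive_comp1 R _ _ _ _ _ _ hin (ds _).
split; first by rewrite F_succ; case: hc.
rewrite /Bound F_succ (derive_val (is_derive := hc)).
set z := (X in (sigma _ i)^`()%classic X).
have /andP[s0 s1] := sb z.
rewrite normrM ger0_norm //.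
apply: le_trans (ler_wpM2r (normr_ge0 _) s1) _.
apply: ler_wpM2l => //.
apply: le_trans (ler_norm_sum _ _ _) _.
clear IH Hm k1 k2 hin hc s0 s1 ds sb b0 z.
move: IH' @D hd; case: m i => [|m] i IH' D hd.
  rewrite (bigD1 i0) //= big1 ?addr0.
    rewrite /D; have [_ ->] := IH' i0.
    by rewrite /v !mxE !eqxx mulr1.
  move=> j jn; rewrite /D; have [_ ->] := IH' j.
  rewrite /v !mxE; move: jn; case: eqP => // _ _; by rewrite mulr0 normr0.
rewrite /= mxE mul_mx_diag.
apply: ler_sum => j _; rewrite !mxE normrM -mulrA.
apply: ler_wpM2l => //.
by have [_ ] := IH' j.
Qed.

Lemma final (WL : 'M[R]_(1, n (p + l))) (bL : R) :
  derivable (zL W b sigma WL bL) a v /\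
  `|'D_v (zL W b sigma WL bL) a| <= Sfinal W beta WL 0 i0.
Proof.
have IH' := @claim p (leqnn p).
pose D j := 'D_v (F p j) a.
have hd : forall j, is_derive a v (F p j) (D j).
  by move=> j; apply: derivableP; case: (IH' j).
have hin := @is_derive_lin R _ _ _ (fun j => WL 0 j) bL a v _ hd.
have -> : zL W b sigma WL bL = (fun x => \sum_j WL 0 j * F p j x + bL).
  by apply/funext => x; rewrite /zL mxE.
split; first by case: hin.
rewrite (derive_val (is_derive := hin)).
apply: le_trans (ler_norm_sum _ _ _) _.
clear hin Hs.
move: WL IH' @D hd; case: p => [|q] WL IH' D hd.
  rewrite (bigD1 i0) //= big1 ?addr0.
    rewrite /D; have [_ ->] := IH' i0.
    by rewrite /v !mxE !eqxx mulr1.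
  move=> j jn; rewrite /D; have [_ ->] := IH' j.
  rewrite /v !mxE; move: jn; case: eqP => // _ _; by rewrite mulr0 normr0.
rewrite /= mxE mul_mx_diag.
apply: ler_sum => j _; rewrite !mxE normrM -mulrA.
apply: ler_wpM2l => //.
by have [_ ] := IH' j.
Qed.
End Main.
Theorem proposition2 (R : realType) (n : nat -> nat)
  (W : forall k : nat, 'M[R]_(n k, n k.-1))
  (b : forall k : nat, 'cV[R]_(n k))
  (sigma : forall k : nat, 'I_(n k) -> R -> R)
  (alpha beta : forall k : nat, 'I_(n k) -> R)
  (l p : nat) (WL : 'M[R]_(1, n (p + l)%N)) (bL : R) :
  (0 < l)%N ->
  (forall k (i : 'I_(n k)), (0 < k)%N -> (k < p.+1 + l)%N ->
     (forall x : R, derivable (sigma k i) x 1) /\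
     0 <= alpha k i /\ alpha k i <= beta k i /\
     slope_restricted (sigma k i) (alpha k i) (beta k i)) ->
  forall a : 'cV[R]_(n l),
    (forall i : 'I_(n l), derivable (zL W b sigma WL bL) a (delta_mx i 0)) /\
    mxnorm_inf (\col_(i < n l) ('D_(delta_mx i 0) (zL W b sigma WL bL) a))
      <= mxnorm_inf (Sfinal W beta WL).
Proof.
move=> l0 H a.
have Hs : forall k (i : 'I_(n k)), (l < k)%N -> (k <= p + l)%N ->
  (forall x, derivable (sigma k i) x 1) /\ 0 <= beta k i /\
  (forall x, 0 <= (sigma k i)^`()%classic x <= beta k i).
  move=> k i lk kp.
  have k0 : (0 < k)%N by apply: leq_ltn_trans lk.
  have kp' : (k < p.+1 + l)%N by rewrite addSn ltnS.
  have [ds [a0 [ab sl]]] := H k i k0 kp'.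
  split => //; split; first exact: le_trans ab.
  move=> x; have /andP[h1 h2] := @slope_deriv R _ x _ _ (ds x) sl.
  by rewrite h2 andbT (le_trans a0 h1).
split=> [i|]; first by have [] := @final R n W b sigma beta l p Hs a i WL bL.
rewrite /mxnorm_inf [X in _ <= X]big_ord_recl big_ord0.
set S := (X in Num.max X 0).
have S0 : 0 <= S by apply: sumr_ge0 => j _; exact: normr_ge0.
apply: bigmax_le => [|i _]; first by rewrite le_max lexx orbT.
rewrite big_ord_recl big_ord0 addr0 mxE.
have [_ h] := @final R n W b sigma beta l p Hs a i WL bL.
rewrite le_max; apply/orP; left.
apply: le_trans h _.
apply: le_trans (ler_norm _) _.
rewrite /S (bigD1 i) //= lerDl.
by apply: sumr_ge0 => j _; exact: normr_ge0.
Qed.
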